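(* Let $f(x) \in \mathbb{Z}[x]$ be an irreducible polynomial and let $r \geq 3$ be an odd positive integer. If $F$ is a splitting sequence of $f(x)$ with constant exponent sequence $(r)_{n \in \mathbb{N}}$ such that exactly $T$ terms of its binary string $\mathcal{B}(F)$ equal ``S'', for some $T \in \mathbb{N}$, then the first $T$ terms $\mathcal{B}_1(F), \ldots, \mathcal{B}_T(F)$ of $\mathcal{B}(F)$ are all equal to ``S''.
   Context: Let $f(x)$ be an irreducible polynomial in $\mathbb{Z}[x]$ and let $(e_n)_{n \in \mathbb{N}}$ be a sequence of positive integers (the exponent sequence). A splitting sequence of $f(x)$ with this exponent sequence is a sequence $F = (f_n(x))_{n \in \mathbb{N}_0}$ of irreducible polynomials in $\mathbb{Z}[x]$ with $f_0(x) = f(x)$ and, for each $k \geq 1$, $f_k(x)$ an irreducible divisor in $\mathbb{Z}[x]$ of $f_{k-1}(x^{e_k})$. The binary string $\mathcal{B}(F) = (\mathcal{B}_n(F))_{n \in \mathbb{N}}$ of $F$ is the sequence over the alphabet $\{\text{``L''}, \text{``S''}\}$ with $\mathcal{B}_n(F) = \text{``L''}$ if $f_n(x) = f_{n-1}(x^{e_n})$ (i.e. $f_{n-1}(x^{e_n})$ is itself irreducible and was taken as $f_n$) and $\mathcal{B}_n(F) = \text{``S''}$ otherwise (i.e. $f_{n-1}(x^{e_n})$ is reducible in $\mathbb{Z}[x]$). *)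

(* Defs.v *)
From HB Require Import structures.
From mathcomp Require Import all_boot all_order all_algebra.
Set Implicit Arguments. Unset Strict Implicit. Unset Printing Implicit Defensive.
Import Order.TTheory GRing.Theory Num.Theory.
Local Open Scope ring_scope.

Definition irreducibleZx (p : {poly int}) : Prop :=
  p != 0 /\ p \isn't a GRing.unit /\
  forall a b : {poly int}, p = a * b -> a \is a GRing.unit \/ b \is a GRing.unit.

Definition dvdZx (g p : {poly int}) : Prop := exists q : {poly int}, p = g * q.

Definition comp_pow (p : {poly int}) (e : nat) : {poly int} := p \Po 'X^e.

Definition splitting_sequence (f : {poly int}) (e : nat -> nat)
    (F : nat -> {poly int}) : Prop :=
  irreducibleZx f /\ F 0%N = f /\
  (forall k, irreducibleZx (F k)) /\
  (forall k, (1 <= k)%N -> dvdZx (F k) (comp_pow (F k.-1) (e k))).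

(* B_n(F) = "S" (for n >= 1) iff f_{n-1}(x^{e_n}) is reducible. *)
Definition is_S (e : nat -> nat) (F : nat -> {poly int}) (n : nat) : Prop :=
  ~ irreducibleZx (comp_pow (F n.-1) (e n)).

(* Main.v *)
Require Import Defs.
From HB Require Import structures.
From mathcomp Require Import all_boot all_order all_algebra all_field.
From Stdlib Require Import Classical.
Set Implicit Arguments. Unset Strict Implicit. Unset Printing Implicit Defensive.
Import Order.TTheory GRing.Theory Num.Theory.
Local Open Scope ring_scope.
Lemma irr_common_root (K L : fieldType) (iota : {rmorphism K -> L}) (Q H : {poly K}) z :
  irreducible_poly Q -> root (map_poly iota Q) z -> root (map_poly iota H) z -> Q %| H.
Proof.
move=> [Q1 Qirr] rQ rH.
have Q0 : Q != 0 by rewrite -size_poly_gt0 ltnW.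
have g0 : gcdp Q H != 0 by rewrite gcdp_eq0 negb_and Q0.
have rg : root (map_poly iota (gcdp Q H)) z by rewrite gcdp_map root_gcd rQ rH.
have sg : size (gcdp Q H) != 1.
  by rewrite -(size_map_poly iota) gtn_eqF // (root_size_gt1 _ rg) // map_poly_eq0.
have E := Qirr _ sg (dvdp_gcdl Q H).
by rewrite -(eqp_dvdl _ E) dvdp_gcdr.
Qed.
Lemma coef_vanish (G : {poly algC}) (m : nat) (z : algC) :
  (0 < m)%N -> m.-primitive_root z -> separable_poly G -> G`_0 != 0 ->
  (forall x, root G x -> root G (z * x)) -> forall j, ~~ (m %| j)%N -> G`_j = 0.
Proof.
move=> m0 zp sepG G00 cl j mj.
have G0 : G != 0 by apply: contraNneq G00 => ->; rewrite coef0.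
have lc0 : lead_coef G != 0 by rewrite lead_coef_eq0.
pose Gz := \poly_(i < size G) (z ^+ i * G`_i).
have hGz x : Gz.[x] = G.[z * x].
  rewrite horner_poly horner_coef; apply: eq_bigr => i _.
  by rewrite exprMn [z ^+ i * G`_i]mulrC -mulrA.
have [r Gr] := closed_field_poly_normal G.
have ur : uniq r.
  rewrite -separable_prod_XsubC -(eqp_separable (eqp_scale _ lc0)) -Gr //.
have dv : \prod_(x <- r) ('X - x%:P) %| Gz.
  apply: uniq_roots_dvdp; last by rewrite uniq_rootsE.
  apply/allP => x xr; rewrite /root hGz; apply/eqP/rootP; apply: cl.
  by rewrite Gr rootZ // root_prod_XsubC.
have dvG : G %| Gz by rewrite Gr dvdpZl.
have Gz0 : Gz`_0 = G`_0 by rewrite coef_poly size_poly_gt0 G0 expr0 mul1r.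
have Gzn0 : Gz != 0 by apply: contraNneq G00 => e; rewrite -Gz0 e coef0.
have sz : (size Gz <= size G)%N by exact: size_poly.
have eqG : G %= Gz by rewrite -dvdp_size_eqp // eqn_leq sz (dvdp_leq _ dvG).
have [[c1 c2] /andP[c10 c20] /= E] := eqpP _ _ eqG.
have c12 : c1 = c2.
  by have := congr1 (fun p : {poly algC} => p`_0) E; rewrite /= !coefZ Gz0 => /mulIf; apply.
have EG : G = Gz by apply: (scalerI c10); rewrite E c12.
have := congr1 (fun p : {poly algC} => p`_j) EG; rewrite /= coef_poly.
case: ltnP => [_ e | big _]; last by rewrite nth_default.
apply/eqP; apply: contraNT mj => Gj0; rewrite (prim_order_dvd zp).
by apply/eqP; apply: (mulIf Gj0); rewrite mul1r -e.
Qed.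
Lemma irr_sep (K : fieldType) (iota : {rmorphism K -> algC}) (Q : {poly K}) :
  irreducible_poly Q -> separable_poly (map_poly iota Q).
Proof.
move=> [Q1 Qirr]; rewrite separable_map unlock.
have Q0 : Q != 0 by rewrite -size_poly_gt0 ltnW.
have d0 : Q^`() != 0.
  have [n sQ] : exists n, size Q = n.+2.
    by exists (size Q).-2; move: Q1; case: (size Q) => [|[|]].
  apply/eqP => /(congr1 (fun p : {poly K} => p`_n)); rewrite coef_deriv coef0.
  move/eqP; rewrite -(fmorph_eq0 iota) rmorphMn mulrn_eq0 /= fmorph_eq0.
  have : Q`_n.+1 != 0 by rewrite -[n.+1]/(n.+2.-1) -sQ -lead_coefE lead_coef_eq0.
  by move/negPf->.
rewrite /coprimep; apply/negPn/negP => h.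
have E := Qirr _ h (dvdp_gcdl _ _).
have : Q %| Q^`() by rewrite -(eqp_dvdl _ E) dvdp_gcdr.
by move/(dvdp_leq d0); rewrite leqNgt lt_size_deriv.
Qed.

Lemma irr_factor (K : fieldType) (q : {poly K}) :
  size q != 1%N -> q != 0 -> exists2 A, irreducible_poly A & A %| q.
Proof.
have [n] := ubnP (size q); elim: n q => // n IH q ltqn q1 q0.
have sq : (1 < size q)%N.
  by move: q1; rewrite -size_poly_eq0 in q0; case: (size q) q0 => [|[|]].
case: (classic (irreducible_poly q)) => [irr | nirr]; first by exists q.
have [d [d1 [dq nd]]] : exists d : {poly K}, size d != 1%N /\ d %| q /\ ~ (d %= q).
  apply: NNPP => H; apply: nirr; split => // d d1 dq; apply: NNPP => nd.
  by apply: H; exists d.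
have d0 : d != 0 by apply/eqP => e; move: dq; rewrite e dvd0p (negPf q0).
have ltd : (size d < size q)%N.
  rewrite ltn_neqAle (dvdp_leq q0 dq) andbT; apply/negP => e.
  by apply: nd; rewrite -dvdp_size_eqp.
have [A Airr Ad] := IH d (leq_trans ltd (ltnSE ltqn)) d1 d0.
by exists A => //; apply: dvdp_trans dq.
Qed.

Lemma size_comp_Xn (R : idomainType) (p : {poly R}) m :
  (0 < m)%N -> p != 0 -> size (p \Po 'X^m) = ((size p).-1 * m).+1.
Proof.
move=> m0 p0; have := size_comp_poly p 'X^m; rewrite size_polyXn /=.
case E: (size (p \Po 'X^m)) => [|n] /= <- //.
move/eqP: E; rewrite size_poly_eq0 => /eqP E.
have := congr1 (fun q : {poly R} => q`_((size p).-1 * m)) E.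
rewrite /= coef_comp_poly_Xn // dvdn_mull // mulnK // coef0 -lead_coefE.
by move/eqP; rewrite lead_coef_eq0 (negPf p0).
Qed.
Lemma tower (K : fieldType) (iota : {rmorphism K -> algC}) (Q : {poly K}) (m : nat) :
  irreducible_poly Q -> (0 < m)%N -> Q`_0 != 0 ->
  (forall t, root (map_poly iota Q) t ->
     irreducible_poly ('X^m - (subfx_root iota t Q)%:P)) ->
  irreducible_poly (Q \Po 'X^m).
Proof.
move=> Qirr m0 Q00 Hext.
have Q0 : Q != 0 by apply: contraNneq Q00 => ->; rewrite coef0.
have sQ1 : (1 < size Q)%N by case: Qirr.
have sQX := size_comp_Xn m0 Q0.
have QX0 : Q \Po 'X^m != 0 by rewrite -size_poly_gt0 sQX.
have key : forall A, irreducible_poly A -> A %| Q \Po 'X^m ->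
    (size (Q \Po 'X^m) <= size A)%N.
  move=> A Airr dA.
  have A0 : A != 0 by case: Airr => h _; rewrite -size_poly_gt0 ltnW.
  have dAi : map_poly iota A %| map_poly iota (Q \Po 'X^m) by rewrite dvdp_map.
  have rQ x : root (map_poly iota A) x -> root (map_poly iota Q) (x ^+ m).
    move=> rx; have := root_dvdp dAi rx.
    by rewrite map_comp_poly map_polyXn /root horner_comp hornerXn.
  have cl x : root (map_poly iota A) x -> forall y, y ^+ m = x ^+ m ->
      root (map_poly iota A) y.
    move=> rx y ey; have rt := rQ x rx; set t := x ^+ m in rt ey.
    have comp (p : {poly K}) :
        map_poly (subfx_inj (iota:=iota) (z:=t) (p:=Q)) (map_poly (inj_subfx iota t Q) p)
        = map_poly iota p.
      rewrite -map_poly_comp; apply: eq_map_poly => a /=.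
      by rewrite /inj_subfx /= subfx_inj_eval // map_polyC hornerC.
    have := @irr_common_root _ _ (subfx_inj (iota:=iota) (z:=t) (p:=Q)) _
      (map_poly (inj_subfx iota t Q) A) x (Hext t rt).
    rewrite comp rx rmorphB /= map_polyXn map_polyC /= subfx_inj_root //.
    rewrite /root !hornerE /= subrr eqxx => /(_ isT isT).
    rewrite -(dvdp_map (subfx_inj (iota:=iota) (z:=t) (p:=Q))) comp.
    rewrite rmorphB /= map_polyXn map_polyC /= subfx_inj_root // => dv.
    by apply: root_dvdp dv _; rewrite /root !hornerE ey subrr.
  have [x rx] : exists x, root (map_poly iota A) x.
    by apply/closed_rootP; rewrite size_map_poly; case: Airr => h _; rewrite gtn_eqF.
  have [z zp] := C_prim_root_exists m0.
  have cl' y : root (map_poly iota A) y -> root (map_poly iota A) (z * y).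
    by move=> ry; apply: (cl y ry); rewrite exprMn prim_expr_order // mul1r.
  have A00 : (map_poly iota A)`_0 != 0.
    apply/negP => /eqP e.
    have : root (map_poly iota A) 0 by rewrite /root horner_coef0 e.
    move/rQ; rewrite expr0n gtn_eqF // /root horner_coef0 coef_map fmorph_eq0.
    by rewrite (negPf Q00).
  have van := coef_vanish m0 zp (irr_sep iota Airr) A00 cl'.
  pose H := \poly_(i < size A) A`_(i * m).
  have AH : A = H \Po 'X^m.
    apply/polyP => i; rewrite coef_comp_poly_Xn //.
    case: (boolP (m %| i)%N) => [/dvdnP [k ->] | nd]; last first.
      by have := van i nd; rewrite coef_map /= => /eqP; rewrite fmorph_eq0 => /eqP.
    rewrite mulnK // coef_poly; case: ltnP => // big.
    rewrite nth_default //; apply: leq_trans big _; exact: leq_pmulr.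
  have H0 : H != 0 by apply: contraNneq A0 => e; rewrite AH e comp_poly0.
  have rH : root (map_poly iota H) (x ^+ m).
    by move: rx; rewrite AH map_comp_poly map_polyXn /root horner_comp hornerXn.
  have QH := irr_common_root Qirr (rQ x rx) rH.
  rewrite AH sQX size_comp_Xn // ltnS leq_mul2r; apply/orP; right.
  by rewrite -!subn1 leq_sub2r // (dvdp_leq H0 QH).
split; first by rewrite sQX ltnS muln_gt0 m0 andbT -subn1 subn_gt0.
move=> q q1 dq.
have q0 : q != 0 by apply/eqP => e; move: dq; rewrite e dvd0p (negPf QX0).
have [A Airr Aq] := irr_factor q1 q0.
have := key A Airr (dvdp_trans Aq dq).
move=> le; rewrite -dvdp_size_eqp // eqn_leq (dvdp_leq QX0 dq) /=.
exact: leq_trans le (dvdp_leq q0 Aq).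
Qed.
Lemma comp_exists (K : fieldType) (g : {poly K}) : g \is monic -> (1 < size g)%N ->
  exists n, exists C : 'M[K]_n.+1, char_poly C = g /\ size g = n.+2.
Proof.
move=> gm sg; have := companionmxK gm; move: (companionmx g).
move: sg; case: (size g) => [|[|n]] // _ C HC.
by exists n, C.
Qed.

Lemma detX (K : fieldType) n (C : 'M[K]_n.+1) k : \det (C ^+ k) = \det C ^+ k.
Proof.
elim: k => [|k IH]; first by rewrite !expr0 det1.
by rewrite !exprS detM IH.
Qed.

Lemma hmx_dvd (K : fieldType) n (C : 'M[K]_n.+1) (g f : {poly K}) :
  char_poly C = g -> g %| f -> horner_mx C f = 0.
Proof.
move=> Cg /dvdpP [q ->]; by rewrite rmorphM /= -Cg Cayley_Hamilton mulr0.
Qed.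

Lemma norm_pow (K : fieldType) (g h : {poly K}) (k : nat) :
  g \is monic -> (1 < size g)%N -> g %| h ^+ k - 'X ->
  exists c : K, c ^+ k = (-1) ^+ (size g).-1 * g`_0.
Proof.
move=> gm sg dv; have [n [C [Cg sgn]]] := comp_exists gm sg.
have := hmx_dvd Cg dv; rewrite rmorphB rmorphXn /= horner_mx_X => /eqP.
rewrite subr_eq0 => /eqP E.
exists (\det (horner_mx C h)); rewrite -detX E sgn /= -Cg char_poly_det.
by rewrite signrMK.
Qed.

Lemma norm_pow2 (K : fieldType) (g : {poly K}) (p : nat) (a : K) :
  g \is monic -> (1 < size g)%N -> g %| 'X^p - a%:P ->
  exists c : K, c ^+ p = a ^+ (size g).-1.
Proof.
move=> gm sg dv; have [n [C [Cg sgn]]] := comp_exists gm sg.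
have := hmx_dvd Cg dv; rewrite rmorphB rmorphXn /= horner_mx_X horner_mx_C => /eqP.
rewrite subr_eq0 => /eqP E.
by exists (\det C); rewrite -detX E det_scalar sgn.
Qed.
Lemma irr_XpC (K : fieldType) (p : nat) (a : K) :
  prime p -> (forall c : K, c ^+ p != a) -> irreducible_poly ('X^p - a%:P).
Proof.
move=> pp Hna.
have p0 : (0 < p)%N := prime_gt0 pp.
have a0 : a != 0 by have := Hna 0; rewrite expr0n gtn_eqF // eq_sym.
have sX : size ('X^p - a%:P) = p.+1 := size_XnsubC _ p0.
have X0 : 'X^p - a%:P != 0 by rewrite -size_poly_gt0 sX.
split; first by rewrite sX ltnS.
move=> q q1 dq.
have q0 : q != 0 by apply/eqP => e; move: dq; rewrite e dvd0p (negPf X0).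
have sq : (1 < size q)%N.
  by move: q1; rewrite -size_poly_eq0 in q0; case: (size q) q0 => [|[|]].
have lq0 : (lead_coef q)^-1 != 0 by rewrite invr_eq0 lead_coef_eq0.
set g := (lead_coef q)^-1 *: q.
have gm : g \is monic by rewrite monicE lead_coefZ mulVf // lead_coef_eq0.
have sg : size g = size q by rewrite size_scale.
have dg : g %| 'X^p - a%:P by rewrite dvdpZl.
have sg1 : (1 < size g)%N by rewrite sg.
have [c hc] := norm_pow2 gm sg1 dg.
have kp : ((size g).-1 <= p)%N.
  by have := dvdp_leq X0 dg; rewrite sX -ltnS; case: (size g) sg1.
case: (ltngtP (size g).-1 p) => [ltkp | gt | ekp].
- set k := (size g).-1 in hc ltkp.
  have k0 : (0 < k)%N by rewrite /k; case: (size g) sg1 => [|[|]].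
  have cop : gcdn k p = 1%N.
    apply/eqP; change (coprime k p); rewrite coprime_sym prime_coprime // gtnNdvd //.
  case: (egcdnP p k0) => km kn E _; rewrite cop in E.
  exfalso; apply/negP: (Hna (c ^+ km / a ^+ kn)).
  rewrite expr_div_n -exprM mulnC exprM hc -exprM mulnC E exprD expr1.
  by rewrite mulrC exprM mulKf ?negbK ?expf_neq0.
- by rewrite ltnNge kp in gt.
- rewrite -dvdp_size_eqp // sX -sg; apply/eqP; rewrite -ekp.
  by case: (size g) sg1.
Qed.
Lemma capelli (n : nat) : odd n -> forall (K : fieldType) (iota : {rmorphism K -> algC}) (a : K),
  (forall p c, prime p -> (p %| n)%N -> c ^+ p != a) -> irreducible_poly ('X^n - a%:P).
Proof.
have [N] := ubnP n; elim: N n => // N IH n ltnN on K iota a Ha.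
case: (ltngtP n 1) => [n0 | n1 | ->].
- by move: on; rewrite ltnS leqn0 in n0; rewrite (eqP n0).
- pose p := pdiv n.
  have pp : prime p := pdiv_prime n1.
  have pn : (p %| n)%N := pdiv_dvd n.
  pose m := (n %/ p)%N.
  have nm : n = (m * p)%N by rewrite divnK.
  have m0 : (0 < m)%N by rewrite divn_gt0 ?prime_gt0 // dvdn_leq // ltnW.
  have mn : (m < n)%N by rewrite ltn_Pdiv // ?prime_gt1 // ltnW.
  have om : odd m by move: on; rewrite nm oddM => /andP [].
  have op : odd p by move: on; rewrite nm oddM => /andP [].
  have a0 : a != 0 by have := Ha p 0 pp pn; rewrite expr0n gtn_eqF ?prime_gt0 // eq_sym.
  have EQ : 'X^n - a%:P = ('X^p - a%:P) \Po 'X^m.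
    by rewrite comp_polyB comp_polyC comp_Xn_poly -exprM -nm.
  have Qirr := irr_XpC pp (fun c => Ha p c pp pn).
  rewrite EQ; apply: tower => //.
    rewrite coefB coefXn coefC (_ : (0 == p)%N = false); last by rewrite eq_sym gtn_eqF ?prime_gt0.
    by rewrite eqxx /= mulr0n sub0r oppr_eq0.
  move=> t rt.
  apply: (IH m (leq_trans mn (ltnSE ltnN)) om _ (subfx_inj (iota:=iota) (z:=t) (p:='X^p - a%:P))).
  move=> q c qp qm; apply/negP => /eqP E.
  have Q0 : 'X^p - a%:P != 0.
    rewrite -size_poly_gt0 size_XnsubC //. exact: prime_gt0.
  have [h eh] := subfxE c; rewrite eh in E.
  have r0 : root (map_poly iota (h ^+ q - 'X)) t.
    have := congr1 (subfx_inj (iota:=iota) (z:=t) (p:='X^p - a%:P)) E.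
    rewrite -rmorphXn /subfx_root !subfx_inj_eval // => e.
    by rewrite /root rmorphB /= hornerD hornerN e subrr.
  have dv := irr_common_root Qirr rt r0.
  have Qm : 'X^p - a%:P \is monic by rewrite monicXnsubC ?prime_gt0.
  have sQ1 : (1 < size (('X^p - a%:P)%R))%N by rewrite size_XnsubC ?ltnS prime_gt0.
  have [c' hc'] := norm_pow Qm sQ1 dv.
  move: hc'; rewrite size_XnsubC ?prime_gt0 //= coefB coefXn coefC (_ : (0 == p)%N = false); last by rewrite eq_sym gtn_eqF ?prime_gt0.
  rewrite eqxx /= mulr0n sub0r -signr_odd op expr1 mulN1r opprK => hc'.
  have qn : (q %| n)%N by rewrite nm dvdn_mulr.
  by move: (Ha q c' qp qn); rewrite hc' eqxx.
- by rewrite expr1; apply: irredp_XsubC.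
Qed.
Lemma hmx_ker (K : fieldType) n (C : 'M[K]_n.+1) (P f : {poly K}) :
  irreducible_poly P -> horner_mx C P = 0 -> horner_mx C f = 0 -> P %| f.
Proof.
move=> [_ Pirr] CP Cf.
have E : mxminpoly C %= P.
  apply: Pirr; last exact: mxminpoly_min.
  by rewrite size_mxminpoly eqSS -lt0n mxminpoly_nonconstant.
by rewrite -(eqp_dvdl _ E) mxminpoly_min.
Qed.

Lemma horner_mx_comp (K : fieldType) n (C : 'M[K]_n.+1) (f h : {poly K}) :
  horner_mx C (f \Po h) = horner_mx (horner_mx C h) f.
Proof.
rewrite comp_polyE [in RHS](_ : f = \sum_(i < size f) f`_i *: 'X^i); last first.
  by rewrite -poly_def coefK.
rewrite !rmorph_sum /=; apply: eq_bigr => i _.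
by rewrite !horner_mxZ rmorphXn /= rmorphXn /= horner_mx_X.
Qed.
Lemma not_pow (K : fieldType) (iota : {rmorphism K -> algC}) (P : {poly K}) (r p : nat) t :
  irreducible_poly P -> irreducible_poly (P \Po 'X^r) -> (0 < r)%N -> prime p -> (p %| r)%N ->
  root (map_poly iota P) t ->
  forall c : subFExtend iota t P, c ^+ p != subfx_root iota t P.
Proof.
move=> Pirr PXirr r0 pp pr rt c; apply/negP => /eqP E.
have sP : (1 < size P)%N by case: Pirr.
have P0 : P != 0 by rewrite -size_poly_gt0 ltnW.
have [h eh] := subfxE c; rewrite eh in E.
set ht := (map_poly iota h).[t].
have Eh : ht ^+ p = t.
  have := congr1 (subfx_inj (iota:=iota) (z:=t) (p:=P)) E.
  by rewrite rmorphXn /= subfx_inj_root // subfx_inj_eval.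
pose s := (r %/ p)%N.
have rs : r = (s * p)%N by rewrite divnK.
have s0 : (0 < s)%N by rewrite divn_gt0 ?prime_gt0 // dvdn_leq.
have sr : (s < r)%N by rewrite ltn_Pdiv // prime_gt1.
have lP0 : (lead_coef P)^-1 != 0 by rewrite invr_eq0 lead_coef_eq0.
pose Pm := (lead_coef P)^-1 *: P.
have Pmm : Pm \is monic by rewrite monicE lead_coefZ mulVf // lead_coef_eq0.
have sPm : size Pm = size P by rewrite size_scale.
have sPm1 : (1 < size Pm)%N by rewrite sPm.
have [n [C [CP sn]]] := comp_exists Pmm sPm1.
have CP0 : horner_mx C P = 0 by apply: (hmx_dvd CP); rewrite dvdpZl // dvdpp.
pose M := horner_mx C h; pose chi := char_poly M.
have Cchi : horner_mx C (chi \Po h) = 0 by rewrite horner_mx_comp Cayley_Hamilton.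
have Pdv : P %| chi \Po h := hmx_ker Pirr CP0 Cchi.
have rchi : root (map_poly iota chi) ht.
  have dvi : map_poly iota P %| map_poly iota (chi \Po h) by rewrite dvdp_map.
  by have := root_dvdp dvi rt; rewrite map_comp_poly /root horner_comp.
have [th rth] : exists th, root ('X^s - ht%:P) th.
  by apply/closed_rootP; rewrite size_XnsubC // gtn_eqF.
have eth : th ^+ s = ht by move: rth; rewrite /root !hornerE subr_eq0 => /eqP.
have rPX : root (map_poly iota (P \Po 'X^r)) th.
  by rewrite map_comp_poly map_polyXn /root horner_comp hornerXn rs exprM eth Eh.
have rR : root (map_poly iota (chi \Po 'X^s)) th.
  by rewrite map_comp_poly map_polyXn /root horner_comp hornerXn eth.
have dv := irr_common_root PXirr rPX rR.
have chi0 : chi != 0 by apply: monic_neq0; apply: char_poly_monic.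
have R0 : chi \Po 'X^s != 0 by rewrite -size_poly_gt0 size_comp_Xn.
have := dvdp_leq R0 dv; rewrite !size_comp_Xn // size_char_poly -sPm sn /= ltnS.
by rewrite leq_mul2l /= leqNgt sr.
Qed.
Lemma qmain (P : {poly rat}) (r : nat) : odd r -> (1 < r)%N ->
  irreducible_poly P -> irreducible_poly (P \Po 'X^r) ->
  irreducible_poly (P \Po 'X^(r * r)).
Proof.
move=> or r1 Pirr PXirr.
have r0 : (0 < r)%N by apply: ltnW.
have P00 : P`_0 != 0.
  apply/negP => /eqP e.
  have rP : root P 0 by rewrite /root horner_coef0 e.
  have [q Pq] := factor_theorem _ _ rP.
  rewrite polyC0 subr0 in Pq.
  have dXr : 'X^r %| P \Po 'X^r by rewrite Pq comp_polyM comp_polyX dvdp_mull.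
  have [_ PXi] := PXirr.
  have E1 := PXi 'X^r ltac:(by rewrite size_polyXn gtn_eqF) dXr.
  have dX : 'X %| P \Po 'X^r by apply: dvdp_trans dXr; apply: dvdp_exp.
  have E2 := PXi 'X ltac:(by rewrite size_polyX) dX.
  move: (eqp_size E1) (eqp_size E2); rewrite size_polyXn size_polyX => e1 e2.
  have : r.+1 = 2 by rewrite e1 e2.
  by case=> r1'; rewrite r1' in r1.
apply: tower => //; first by rewrite muln_gt0 r0.
move=> t rt.
apply: (@capelli (r * r) _ _ (subfx_inj (iota:=ratr) (z:=t) (p:=P))); first by rewrite oddM or.
move=> q c qp qrr.
have qr : (q %| r)%N by move: qrr; rewrite Euclid_dvdM // orbb.
exact: (not_pow Pirr PXirr r0 qp qr rt).
Qed.
Lemma zirr_mc (P : {poly int}) : irreducibleZx P -> (1 < size P)%N -> irreducible_poly P.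
Proof.
move=> [P0 [Pnu Pf]] sP; split => // q q1 dq.
have q0 : q != 0 by apply/eqP => e; move: dq; rewrite e dvd0p (negPf P0).
have [r Pr] := dvdpP_int dq.
case: (Pf _ _ Pr) => [u | u].
  by move: u; rewrite poly_unitE size_zprimitive (negPf q1).
have sr : (size r <= 1)%N by move: u; rewrite poly_unitE => /andP [/eqP -> _].
have c0 : r`_0 != 0 by apply/eqP => e; move: u; rewrite poly_unitE e unitr0 andbF.
have qz : zcontents q != 0 by rewrite zcontents_eq0.
apply: (eqp_trans (_ : q %= zprimitive q)).
  by rewrite {1}[q]zpolyEprim eqp_scale.
by rewrite Pr (size1_polyC sr) mulrC mul_polyC eqp_sym eqp_scale.
Qed.

Lemma const_factor (P a : {poly int}) (c : int) (k : nat) : (0 < k)%N ->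
  irreducibleZx P -> (1 < size P)%N -> P \Po 'X^k = a * c%:P -> c \is a GRing.unit.
Proof.
move=> k0 [P0 [Pnu Pf]] sP E.
pose P' := \poly_(i < size P) a`_(i * k).
have EP : P = P' * c%:P.
  apply/polyP => i; rewrite coefMC coef_poly.
  case: ltnP => [_ | big]; last by rewrite mul0r nth_default.
  have := congr1 (fun p : {poly int} => p`_(i * k)) E.
  by rewrite /= coef_comp_poly_Xn // dvdn_mull // mulnK // coefMC.
case: (Pf _ _ EP) => u.
  have : (size P <= 1)%N.
    rewrite EP; apply: leq_trans (size_polyMleq _ _) _.
    move: u; rewrite poly_unitE => /andP [/eqP -> _].
    by rewrite size_polyC; case: (c != 0).
  by rewrite leqNgt sP.
by move: u; rewrite poly_unitE coefC eqxx => /andP [].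
Qed.

Lemma zirr_back (P : {poly int}) (k : nat) : (0 < k)%N -> irreducibleZx P -> (1 < size P)%N ->
  irreducible_poly (P \Po 'X^k) -> irreducibleZx (P \Po 'X^k).
Proof.
move=> k0 Pi sP [_ irrk].
have P0 : P != 0 by case: Pi.
have sPX := size_comp_Xn k0 P0.
have PX0 : P \Po 'X^k != 0 by rewrite -size_poly_gt0 sPX.
have cunit (c : int) : c \is a GRing.unit -> c%:P \is a GRing.unit.
  move=> cu; have cn0 : c != 0 by apply: contraTneq cu => ->; rewrite unitr0.
  by rewrite poly_unitE size_polyC cn0 coefC eqxx cu.
split => //; split.
  rewrite poly_unitE sPX negb_and eqSS muln_eq0 negb_or -lt0n -lt0n k0 andbT.
  by rewrite -subn1 subn_gt0 sP.
move=> a b E.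
have a0 : a != 0 by apply: contraNneq PX0 => e; rewrite E e mul0r.
have b0 : b != 0 by apply: contraNneq PX0 => e; rewrite E e mulr0.
case: (eqVneq (size a) 1%N) => sa.
  left; rewrite (size1_polyC (eq_leq sa)); apply: cunit.
  apply: (const_factor (a := b) k0 Pi sP).
  by rewrite E mulrC {1}(size1_polyC (eq_leq sa)).
right.
have E1 := irrk a sa (eq_ind_r (fun p => a %| p) (dvdp_mulIl a b) E).
have sb : size b = 1%N.
  have hb : (0 < size b)%N by rewrite size_poly_gt0.
  move: (eqp_size E1); rewrite E size_mul // => e.
  move: e hb; case: (size b) => [|n] //; rewrite addnS /= => /eqP.
  by rewrite -{1}[size a]addn0 eqn_add2l => /eqP <-.
rewrite (size1_polyC (eq_leq sb)); apply: cunit.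
apply: (const_factor (a := a) k0 Pi sP).
by rewrite E {1}(size1_polyC (eq_leq sb)).
Qed.
Lemma main_Z (P : {poly int}) r : odd r -> (1 < r)%N -> irreducibleZx P ->
  irreducibleZx (comp_pow P r) -> irreducibleZx (comp_pow (comp_pow P r) r).
Proof.
move=> or r1 HP HPX; rewrite /comp_pow -comp_polyA comp_Xn_poly -exprM.
case: (leqP (size P) 1) => sP.
  have EP := size1_polyC sP.
  by rewrite EP comp_polyC -EP.
have r0 : (0 < r)%N by apply: ltnW.
have P0 : P != 0 by case: HP.
apply: zirr_back => //; first by rewrite muln_gt0 r0.
apply/irreducible_rat_int; rewrite map_comp_poly map_polyXn.
apply: qmain => //.
  by apply/irreducible_rat_int; exact: zirr_mc.
have := zirr_mc HPX; rewrite /comp_pow size_comp_Xn // ltnS muln_gt0 r0 andbT.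
move=> /(_ ltac:(by rewrite -subn1 subn_gt0)) /irreducible_rat_int.
by rewrite map_comp_poly map_polyXn.
Qed.
Lemma irr_unit (p u : {poly int}) : irreducibleZx p -> u \is a GRing.unit -> irreducibleZx (p * u).
Proof.
move=> [p0 [pnu pf]] uu.
have u0 : u != 0 by apply: contraTneq uu => ->; rewrite unitr0.
split; first by rewrite mulf_neq0.
split; first by rewrite unitrMl.
move=> a b E.
have Ep : p = a * (b * u^-1) by rewrite mulrA -E mulrK.
case: (pf _ _ Ep) => h; [by left | right].
have uV : u^-1 \is a GRing.unit by rewrite unitrV.
by rewrite -(unitrMl b uV).
Qed.

Lemma L_next (f : {poly int}) (r : nat) (F : nat -> {poly int}) (n : nat) :
  splitting_sequence f (fun _ => r) F -> odd r -> (1 < r)%N -> (1 <= n)%N ->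
  ~ is_S (fun _ => r) F n -> ~ is_S (fun _ => r) F n.+1.
Proof.
move=> [_ [_ [Firr Fdiv]]] or r1 n1 nS.
have HI : irreducibleZx (comp_pow (F n.-1) r) := NNPP _ nS.
rewrite /is_S /= => H; apply: H.
have [q Eq] := Fdiv n n1.
have [_ [_ HIf]] := HI.
case: (HIf _ _ Eq) => u.
  by case: (Firr n) => _ [] /negP.
have EF : F n = comp_pow (F n.-1) r * q^-1 by rewrite Eq mulrK.
have sq : (size q^-1 <= 1)%N.
  have uV : q^-1 \is a GRing.unit by rewrite unitrV.
  by move: uV; rewrite poly_unitE => /andP [/eqP -> _].
rewrite EF {1}/comp_pow comp_polyM (size1_polyC sq) comp_polyC -(size1_polyC sq).
apply: irr_unit; last by rewrite unitrV.
exact: main_Z.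
Qed.

Theorem corollary4p2 (f : {poly int}) (r : nat) (F : nat -> {poly int}) (T : nat) :
  irreducibleZx f -> odd r -> (3 <= r)%N ->
  splitting_sequence f (fun _ => r) F ->
  (exists s : seq nat, uniq s /\ size s = T /\
     (forall n : nat, n \in s <-> ((1 <= n)%N /\ is_S (fun _ => r) F n))) ->
  forall n : nat, (1 <= n)%N -> (n <= T)%N -> is_S (fun _ => r) F n.
Proof.
move=> Hf or r3 Hss [s [us [ss Hs]]] n n1 nT.
have r1 : (1 < r)%N by apply: leq_trans r3.
apply: NNPP => nS.
have claim : forall k, ~ is_S (fun _ => r) F (n + k).
  elim=> [|k IH]; first by rewrite addn0.
  rewrite addnS; apply: (L_next Hss or r1) => //.
  by apply: leq_trans n1 (leq_addr _ _).
have sub : {subset s <= iota 1 n.-1}.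
  move=> x /Hs [x1 xS]; rewrite mem_iota x1 /= add1n prednK //.
  rewrite ltnNge; apply/negP => le.
  by apply: (claim (x - n)%N); rewrite subnKC.
have := uniq_leq_size us sub; rewrite size_iota ss.
move=> h; have := leq_trans nT h.
by rewrite leqNgt ltn_predL n1.
Qed.
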